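(* Let $G$ be a small category and $X$ a set with a partial category action by $G$. Let $\overline{X} = \{(g,x)\in{\rm mor}(G)\times X\mid d(g)\cdot x\text{ is defined}\}$ and let $\sim$ be the relation on $\overline{X}$ defined below. If $(g,x),(g',x')\in\overline{X}$ satisfy $(g,x)\sim(g',x')$, then for every $p\in{\rm mor}(G)$ with $(p,g),(p,g')\in G^2$ we have $(pg,x)\sim(pg',x')$.
   Context: Conventions: $G$ is a small category; objects are identified with their identity morphisms, so ${\rm ob}(G)\subseteq{\rm mor}(G)$; $d(g), c(g)$ are domain and codomain, $G^2=\{(g,h)\mid d(g)=c(h)\}$. A partial category action by $G$ on $X$ is a partial function ${\rm mor}(G)\times X\to X$, $(g,x)\mapsto g\cdot x$ where defined, such that: (C1) for every $x$ there is $e\in{\rm ob}(G)$ with $e\cdot x$ defined, and whenever $f\in{\rm ob}(G)$ and $f\cdot x$ is defined, $f\cdot x=x$; (C2) if $g\cdot x$ is defined then $d(g)\cdot x$ is defined; (C3) if $(g,h)\in G^2$ and $h\cdot x$ is defined, then $(gh)\cdot x$ is defined iff $g\cdot(h\cdot x)$ is defined, and then they are equal. The relation $\sim$ on $\overline{X}$: $(g,x)\sim(g',x')$ if either (i) there is $h\in{\rm mor}(G)$ with $(g',h)\in G^2$, $h\cdot x$ defined, $g = g'h$ and $x' = h\cdot x$; or (ii) $x = x'$, $g,g'\in{\rm ob}(G)$, and both $g\cdot x$ and $g'\cdot x'$ are defined. *)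

(* Defs.v *)
(* Small categories presented by their set of morphisms,
   objects identified with identity morphisms. *)
From Stdlib Require Import Classical.

Record SmallCategory := {
  Mor : Type;
  is_ob : Mor -> Prop;
  dom : Mor -> Mor;
  cod : Mor -> Mor;
  (* composition g h (= g ∘ h); only meaningful when dom g = cod h *)
  comp : Mor -> Mor -> Mor;
  dom_ob : forall g, is_ob (dom g);
  cod_ob : forall g, is_ob (cod g);
  ob_dom : forall e, is_ob e -> dom e = e;
  ob_cod : forall e, is_ob e -> cod e = e;
  comp_dom : forall g h, dom g = cod h -> dom (comp g h) = dom h;
  comp_cod : forall g h, dom g = cod h -> cod (comp g h) = cod g;
  comp_id_l : forall g, comp (cod g) g = g;
  comp_id_r : forall g, comp g (dom g) = g;
  comp_assoc : forall f g h, dom f = cod g -> dom g = cod h ->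
      comp f (comp g h) = comp (comp f g) h
}.

Arguments is_ob {_}. Arguments dom {_}. Arguments cod {_}. Arguments comp {_}.

Definition composable {G : SmallCategory} (g h : Mor G) : Prop := dom g = cod h.

(* A partial function mor(G) × X → X, given as act g x = Some (g·x) when defined. *)
Definition defined {G : SmallCategory} {X : Type}
  (act : Mor G -> X -> option X) (g : Mor G) (x : X) : Prop :=
  exists y, act g x = Some y.

Definition is_partial_category_action (G : SmallCategory) (X : Type)
  (act : Mor G -> X -> option X) : Prop :=
  (forall x, (exists e, is_ob e /\ defined act e x) /\
             (forall f, is_ob f -> defined act f x -> act f x = Some x)) /\
  (forall g x, defined act g x -> defined act (dom g) x) /\
  (forall g h x y, composable g h -> act h x = Some y ->
      (defined act (comp g h) x <-> defined act g y) /\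
      (defined act (comp g h) x -> act (comp g h) x = act g y)).

Definition in_Xbar {G : SmallCategory} {X : Type}
  (act : Mor G -> X -> option X) (g : Mor G) (x : X) : Prop :=
  defined act (dom g) x.

Definition sim_rel {G : SmallCategory} {X : Type}
  (act : Mor G -> X -> option X) (g : Mor G) (x : X) (g' : Mor G) (x' : X) : Prop :=
  (exists h, composable g' h /\ defined act h x /\ g = comp g' h /\ act h x = Some x')
  \/ (x = x' /\ is_ob g /\ is_ob g' /\ defined act g x /\ defined act g' x').

(* Main.v *)
Require Import Defs.

Theorem proposition3p6 (G : SmallCategory) (X : Type)
  (act : Mor G -> X -> option X)
  (Hact : is_partial_category_action G X act)
  (g : Mor G) (x : X) (g' : Mor G) (x' : X)
  (Hgx : in_Xbar act g x) (Hgx' : in_Xbar act g' x')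
  (Hsim : sim_rel act g x g' x') :
  forall p : Mor G, composable p g -> composable p g' ->
    sim_rel act (comp p g) x (comp p g') x'.
Proof.
  intros p Hpg Hpg'.
  destruct Hact as [HC1 [HC2 HC3]].
  unfold composable in *.
  destruct Hsim as [[h [Hg'h [Hd [Heq Hact]]]] | [Hxx [Hog [Hog' [Hd Hd']]]]].
  - left. exists h. repeat split.
    + unfold composable. rewrite comp_dom; assumption.
    + assumption.
    + subst g. apply comp_assoc; assumption.
    + assumption.
  - subst x'. left. exists g. repeat split.
    + unfold composable. rewrite comp_dom by exact Hpg'.
      rewrite ob_dom by assumption. rewrite ob_cod by assumption.
      rewrite <- (ob_cod G g Hog), <- (ob_cod G g' Hog'). congruence.
    + assumption.
    + assert (Hg : g = g').
      { rewrite <- (ob_cod G g Hog), <- (ob_cod G g' Hog'). congruence. }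
      subst g'.
      assert (Hp : comp p g = p).
      { rewrite <- (ob_cod G g Hog) at 1. rewrite <- Hpg. apply comp_id_r. }
      rewrite Hp. rewrite Hp. reflexivity.
    + destruct (HC1 x) as [_ Hf]. apply Hf; assumption.
Qed.
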